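(* Let $(M,\circ)$ be a fuzzy $\Gamma$-hypersemigroup and let $(M,\ast)$ be its associated $\Gamma$-hypersemigroup, where $a\ast\gamma\ast b=\{x\in M\mid (a\circ\gamma\circ b)(x)>0\}$ for all $a,b\in M$, $\gamma\in\Gamma$. Let $\rho$ be an equivalence relation on $M$, and on $M/\rho=\{a\rho : a\in M\}$ define $a\rho\otimes\gamma\otimes b\rho=\{c\rho : c\in a\ast\gamma\ast b\}=\{c\rho : (a\circ\gamma\circ b)(c)>0\}$. Then: (i) $\rho$ is a fuzzy $\Gamma$-regular relation on $(M,\circ)$ if and only if $(M/\rho,\otimes)$ is a $\Gamma$-hypersemigroup. (ii) $\rho$ is a fuzzy $\Gamma$-strongly regular relation on $(M,\circ)$ if and only if $(M/\rho,\otimes)$ is a $\Gamma$-semigroup.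
   Context: $M$ and $\Gamma$ are non-empty sets; $F(M)$ is the set of fuzzy subsets of $M$. A fuzzy $\Gamma$-hyperoperation is a map $M\times\Gamma\times M\to F(M)$, $(a,\gamma,b)\mapsto a\circ\gamma\circ b$. For a fuzzy subset $\mu\neq 0$, $(a\circ\alpha\circ\mu)(r)=\bigvee_{t\in M}((a\circ\alpha\circ t)(r)\wedge\mu(t))$ and $(\mu\circ\alpha\circ a)(r)=\bigvee_{t\in M}(\mu(t)\wedge(t\circ\alpha\circ a)(r))$ (both $0$ if $\mu=0$). $(M,\circ)$ is a fuzzy $\Gamma$-hypersemigroup if $(a\circ\alpha\circ b)\circ\beta\circ c=a\circ\alpha\circ(b\circ\beta\circ c)$ for all $a,b,c\in M$, $\alpha,\beta\in\Gamma$. A $\Gamma$-hypersemigroup is a set $M$ where each $\gamma\in\Gamma$ is a hyperoperation $x\gamma y\subseteq M$ (non-empty) with $x\alpha(y\beta z)=(x\alpha y)\beta z$; it is a $\Gamma$-semigroup when each $\gamma$ is an operation (single-valued). For an equivalence relation $\rho$ on $M$ and fuzzy subsets $\mu,\nu$, write $\mu\rho\nu$ if (1) $\mu(a)>0$ implies there is $b$ with $\nu(b)>0$ and $a\rho b$, and (2) $\nu(x)>0$ implies there is $y$ with $\mu(y)>0$ and $x\rho y$. $\rho$ is a fuzzy $\Gamma$-regular relation on $(M,\circ)$ if for all $a,b,c\in M$, $\gamma\in\Gamma$: $a\rho b$ implies $(a\circ\gamma\circ c)\rho(b\circ\gamma\circ c)$ and $(c\circ\gamma\circ a)\rho(c\circ\gamma\circ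 b)$. $\rho$ is a fuzzy $\Gamma$-strongly regular relation on $(M,\circ)$ if for all $a,b,c,d\in M$, $\gamma\in\Gamma$ with $a\rho b$ and $c\rho d$: for all $x$ with $(a\circ\gamma\circ c)(x)>0$ and all $y$ with $(b\circ\gamma\circ d)(y)>0$, we have $x\rho y$. *)

(* Defs.v *)
From mathcomp Require Import all_boot all_order all_algebra.
From mathcomp Require Import all_classical all_reals.
Import Order.TTheory GRing.Theory Num.Theory.
Set Implicit Arguments. Unset Strict Implicit. Unset Printing Implicit Defensive.
Local Open Scope classical_set_scope.
Local Open Scope ring_scope.

Section FuzzyGamma.
Context {R : realType} {M G : Type}.

Definition fuzzy_subset (mu : M -> R) : Prop := forall x, 0 <= mu x <= 1.

Definition fuzzy_Gamma_hyperop (o : M -> G -> M -> M -> R) : Prop :=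
  forall a g b, fuzzy_subset (o a g b).

Definition fcompl (o : M -> G -> M -> M -> R) (a : M) (g : G) (mu : M -> R) : M -> R :=
  fun r => sup [set Num.min (o a g t r) (mu t) | t in [set: M]].

Definition fcompr (o : M -> G -> M -> M -> R) (mu : M -> R) (g : G) (a : M) : M -> R :=
  fun r => sup [set Num.min (mu t) (o t g a r) | t in [set: M]].

Definition fuzzy_Gamma_hypersemigroup (o : M -> G -> M -> M -> R) : Prop :=
  forall a b c al be, fcompr o (o a al b) be c = fcompl o a al (o b be c).

Definition assoc_hop (o : M -> G -> M -> M -> R) (a : M) (g : G) (b : M) : set M :=
  [set x | 0 < o a g b x].

Definition Gamma_hypersemigroup {T : Type} (S : set T) (hop : T -> G -> T -> set T) : Prop :=
  (forall x g y, S x -> S y -> hop x g y !=set0 /\ hop x g y `<=` S) /\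
  (forall x y z al be, S x -> S y -> S z ->
     \bigcup_(u in hop y be z) hop x al u = \bigcup_(u in hop x al y) hop u be z).

Definition Gamma_semigroup {T : Type} (S : set T) (hop : T -> G -> T -> set T) : Prop :=
  Gamma_hypersemigroup S hop /\
  (forall x g y, S x -> S y -> exists w, hop x g y = [set w]).

Definition is_equivalence (rho : M -> M -> Prop) : Prop :=
  (forall x, rho x x) /\ (forall x y, rho x y -> rho y x) /\
  (forall x y z, rho x y -> rho y z -> rho x z).

Definition cls (rho : M -> M -> Prop) (a : M) : set M := [set y | rho a y].
Definition quot_set (rho : M -> M -> Prop) : set (set M) := [set cls rho a | a in [set: M]].

Definition quotient_hop_spec (o : M -> G -> M -> M -> R) (rho : M -> M -> Prop)
  (op : set M -> G -> set M -> set (set M)) : Prop :=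
  forall a g b, op (cls rho a) g (cls rho b) = [set cls rho c | c in assoc_hop o a g b].

Definition fuzzy_rel (rho : M -> M -> Prop) (mu nu : M -> R) : Prop :=
  (forall a, 0 < mu a -> exists b, 0 < nu b /\ rho a b) /\
  (forall x, 0 < nu x -> exists y, 0 < mu y /\ rho x y).

Definition fuzzy_Gamma_regular (o : M -> G -> M -> M -> R) (rho : M -> M -> Prop) : Prop :=
  forall a b c g, rho a b ->
    fuzzy_rel rho (o a g c) (o b g c) /\ fuzzy_rel rho (o c g a) (o c g b).

Definition fuzzy_Gamma_strongly_regular (o : M -> G -> M -> M -> R) (rho : M -> M -> Prop) : Prop :=
  forall a b c d g, rho a b -> rho c d ->
    forall x y, 0 < o a g c x -> 0 < o b g d y -> rho x y.

End FuzzyGamma.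

(* Main.v *)
Require Import Defs.
From mathcomp Require Import all_boot all_order all_algebra.
From mathcomp Require Import all_classical all_reals.
Local Open Scope classical_set_scope.
Local Open Scope ring_scope.

Section Aux.
Context {R : realType} {M G : Type}.
Variable o : M -> G -> M -> M -> R.
Variable rho : M -> M -> Prop.
Hypothesis Heq : is_equivalence rho.

Lemma cls_eq a b : rho a b -> cls rho a = cls rho b.
Proof.
case: Heq => refl [sym trans] hab; rewrite /cls; apply/funext => y; apply/propext.
split=> h; [exact: trans (sym _ _ hab) h | exact: trans hab h].
Qed.

Lemma cls_rho a b : cls rho a = cls rho b -> rho a b.
Proof.
case: Heq => refl [sym trans] E.
have : cls rho b b by exact: refl.
by rewrite -E.
Qed.

Definition qop (X : set M) (g : G) (Y : set M) : set (set M) :=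
  [set C | exists a b c, [/\ X = cls rho a, Y = cls rho b, 0 < o a g b c & C = cls rho c]].

Lemma spec_of_regular : fuzzy_Gamma_regular o rho -> quotient_hop_spec o rho qop.
Proof.
move=> Hreg a g b; apply/seteqP; split => C.
- move=> [a' [b' [c [Ea Eb hc ->]]]].
  have ha := cls_rho _ _ Ea; have hb := cls_rho _ _ Eb.
  have [_ H1] := (Hreg a a' b' g ha).1.
  have [y [hy rcy]] := H1 c hc.
  have [_ H2] := (Hreg b b' a g hb).2.
  have [z [hz ryz]] := H2 y hy.
  exists z => //.
  case: Heq => _ [_ trans].
  by apply/esym/cls_eq; exact: trans rcy ryz.
- move=> [c hc <-]; exists a, b, c; split => //.
Qed.

Lemma hsg_of_spec op : Gamma_hypersemigroup [set: M] (assoc_hop o) ->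
  quotient_hop_spec o rho op -> Gamma_hypersemigroup (quot_set rho) op.
Proof.
move=> [Hne Has] Hsp; split.
- move=> X g Y [x _ <-] [y _ <-]; rewrite Hsp; split.
  + have [[c hc] _] := Hne x g y I I.
    by exists (cls rho c); exists c.
  + by move=> C [c _ <-]; exists c.
- move=> X Y Z al be [x _ <-] [y _ <-] [z _ <-].
  have As := Has x y z al be I I I.
  rewrite !Hsp; apply/seteqP; split => C.
  + move=> [U [c hc <-] HC]; move: HC; rewrite Hsp => -[d hd <-].
    have : (\bigcup_(u in assoc_hop o y be z) assoc_hop o x al u) d by exists c.
    rewrite As => -[u hu hdu].
    exists (cls rho u); first by exists u.
    by rewrite Hsp; exists d.
  + move=> [U [c hc <-] HC]; move: HC; rewrite Hsp => -[d hd <-].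
    have : (\bigcup_(u in assoc_hop o x al y) assoc_hop o u be z) d by exists c.
    rewrite -As => -[u hu hdu].
    exists (cls rho u); first by exists u.
    by rewrite Hsp; exists d.
Qed.

End Aux.
Arguments cls_eq {M rho} Heq a b.
Arguments cls_rho {M rho} Heq a b.
Arguments spec_of_regular {R M G o rho} Heq.
Arguments hsg_of_spec {R M G o rho op}.

Theorem theorem5p5 (R : realType) (M G : Type) (o : M -> G -> M -> M -> R) :
  inhabited M -> inhabited G ->
  fuzzy_Gamma_hyperop o ->
  fuzzy_Gamma_hypersemigroup o ->
  Gamma_hypersemigroup [set: M] (assoc_hop o) ->
  forall rho : M -> M -> Prop, is_equivalence rho ->
  (fuzzy_Gamma_regular o rho <->
     exists op, quotient_hop_spec o rho op /\ Gamma_hypersemigroup (quot_set rho) op) /\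
  (fuzzy_Gamma_strongly_regular o rho <->
     exists op, quotient_hop_spec o rho op /\ Gamma_semigroup (quot_set rho) op).
Proof.
move=> _ _ _ _ Hhs rho Heq.
have Heq' := Heq; case: Heq' => refl [sym trans].
split; split.
- move=> Hreg; exists (qop o rho); split; first exact: spec_of_regular.
  exact: hsg_of_spec (spec_of_regular Heq Hreg).
- move=> [op [Hsp _]] a b c g hab.
  have E := cls_eq Heq _ _ hab.
  have E1 := Hsp a g c; have E2 := Hsp b g c; have E3 := Hsp c g a; have E4 := Hsp c g b.
  rewrite E in E1 E3.
  split; split.
  + move=> x hx.
    have : [set cls rho c0 | c0 in assoc_hop o a g c] (cls rho x) by exists x.
    rewrite -E1 E2 => -[y hy Ey]; exists y; split => //; exact: cls_rho Heq _ _ (esym Ey).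
  + move=> x hx.
    have : [set cls rho c0 | c0 in assoc_hop o b g c] (cls rho x) by exists x.
    rewrite -E2 E1 => -[y hy Ey]; exists y; split => //; exact: cls_rho Heq _ _ (esym Ey).
  + move=> x hx.
    have : [set cls rho c0 | c0 in assoc_hop o c g a] (cls rho x) by exists x.
    rewrite -E3 E4 => -[y hy Ey]; exists y; split => //; exact: cls_rho Heq _ _ (esym Ey).
  + move=> x hx.
    have : [set cls rho c0 | c0 in assoc_hop o c g b] (cls rho x) by exists x.
    rewrite -E4 E3 => -[y hy Ey]; exists y; split => //; exact: cls_rho Heq _ _ (esym Ey).
- move=> Hsr.
  have Hreg : fuzzy_Gamma_regular o rho.
    move=> a b c g hab; split; split.
    + move=> x hx; have [[y hy] _] := Hhs.1 b g c I I.
      by exists y; split => //; exact: Hsr hab (refl c) x y hx hy.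
    + move=> x hx; have [[y hy] _] := Hhs.1 a g c I I.
      by exists y; split => //; exact: Hsr (sym _ _ hab) (refl c) x y hx hy.
    + move=> x hx; have [[y hy] _] := Hhs.1 c g b I I.
      by exists y; split => //; exact: Hsr (refl c) hab x y hx hy.
    + move=> x hx; have [[y hy] _] := Hhs.1 c g a I I.
      by exists y; split => //; exact: Hsr (refl c) (sym _ _ hab) x y hx hy.
  have Hsp := spec_of_regular Heq Hreg.
  exists (qop o rho); split => //; split; first exact: hsg_of_spec Hsp.
  move=> X g Y [x _ <-] [y _ <-].
  have [[c hc] _] := Hhs.1 x g y I I.
  exists (cls rho c); rewrite Hsp; apply/seteqP; split => C.
  + move=> [d hd <-]; rewrite /set1 /=; apply/esym/cls_eq => //.
    exact: Hsr (refl x) (refl y) c d hc hd.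
  + move=> ->; by exists c.
- move=> [op [Hsp [_ Hsg]]] a b c d g hab hcd x y hx hy.
  have [w Ew] := Hsg (cls rho a) g (cls rho c) (ex_intro2 _ _ a I erefl) (ex_intro2 _ _ c I erefl).
  have E1 := Hsp a g c; have E2 := Hsp b g d.
  rewrite (cls_eq Heq _ _ hab) (cls_eq Heq _ _ hcd) in Ew E1.
  have hx' : [set cls rho c0 | c0 in assoc_hop o a g c] (cls rho x) by exists x.
  have hy' : [set cls rho c0 | c0 in assoc_hop o b g d] (cls rho y) by exists y.
  rewrite -E2 Ew in hy'.
  rewrite -E1 Ew in hx'.
  apply: (cls_rho Heq); by rewrite hx' hy'.
Qed.
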